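(* Let $\beta=0$ and $\alpha=n/m$ with $n,m$ positive integers, $\gcd(n,m)=1$. For $p_0\in[0,1)$ let $\Lambda(\alpha,p_0)=\bigcup_{k=0}^{m-1}\{(q,(p_0+k\alpha)\bmod 1): q\in[0,1)\}$, a union of $m$ distinct horizontal circles. Then: (i) $\phi(\Lambda(\alpha,p_0))=\Lambda(\alpha,p_0)$ and $\phi$ restricted to $\Lambda(\alpha,p_0)$ is an interval exchange transformation, i.e. a bijection of $\Lambda(\alpha,p_0)$ for which there is a partition of $\Lambda(\alpha,p_0)$ into finitely many half-open horizontal segments such that on each segment $\phi(q,p)=(q+a,p+b)\pmod 1$ for constants $(a,b)$ depending on the segment; (ii) if $p_0\in\mathbb{Q}$ then there exists an integer $k=k(\alpha,p_0)\ge1$ such that $\phi^k$ restricted to $\Lambda(\alpha,p_0)$ is the identity; (iii) if $p_0\notin\mathbb{Q}$ then $\phi$ restricted to $\Lambda(\alpha,p_0)$ has no periodic points.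
   Context: $\mathbb{T}^2=[0,1)^2$ with addition modulo 1. Define $\theta(q)=1$ for $q\in[0,\tfrac12)$ and $\theta(q)=-1$ for $q\in[\tfrac12,1)$. The triangle map with parameters $(\alpha,\beta)$ is $\phi(q,p)=(q+p+\alpha\theta(q)+\beta,\ p+\alpha\theta(q)+\beta)\pmod 1$; here $\beta=0$, so $\phi(q,p)=(q+p+\alpha\theta(q),\ p+\alpha\theta(q))\pmod 1$. *)

(* Defs.v *)
From Stdlib Require Import Reals Lra Lia ZArith.
Open Scope R_scope.

(* fractional part: x mod 1, in [0,1).  Int_part x = up x - 1 = floor x. *)
Definition frac (x : R) : R := x - IZR (Int_part x).

Definition theta (q : R) : R := if Rlt_dec q (1/2) then 1 else -1.

(* the triangle map with beta = 0, points of T^2 represented in [0,1)^2 *)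
Definition phi (alpha : R) (x : R * R) : R * R :=
  let (q, p) := x in
  (frac (q + p + alpha * theta q), frac (p + alpha * theta q)).

Definition Lambda (m : nat) (alpha p0 : R) (x : R * R) : Prop :=
  0 <= fst x < 1 /\
  exists k : nat, (k < m)%nat /\ snd x = frac (p0 + INR k * alpha).

Definition hseg (q1 q2 p : R) (x : R * R) : Prop :=
  q1 <= fst x < q2 /\ snd x = p.

Definition IET_on (f : R * R -> R * R) (S : R * R -> Prop) : Prop :=
  (forall x, S x -> S (f x)) /\
  (forall x y, S x -> S y -> f x = f y -> x = y) /\
  (forall y, S y -> exists x, S x /\ f x = y) /\
  exists (N : nat) (q1 q2 p a b : nat -> R),
    (forall i, (i < N)%nat -> 0 <= q1 i < q2 i /\ q2 i <= 1) /\
    (forall i x, (i < N)%nat -> hseg (q1 i) (q2 i) (p i) x -> S x) /\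
    (forall x, S x -> exists i, (i < N)%nat /\ hseg (q1 i) (q2 i) (p i) x /\
        forall j, (j < N)%nat -> hseg (q1 j) (q2 j) (p j) x -> j = i) /\
    (forall i x, (i < N)%nat -> hseg (q1 i) (q2 i) (p i) x ->
        f x = (frac (fst x + a i), frac (snd x + b i))).

Definition is_rational (x : R) : Prop :=
  exists (a b : Z), b <> 0%Z /\ x = IZR a / IZR b.

(* Main.v *)
Require Import Defs.
From Stdlib Require Import Reals Lra Lia ZArith Arith Classical.
Open Scope R_scope.

Lemma frac_unique (x f : R) (z : Z) : x = IZR z + f -> 0 <= f < 1 -> frac x = f.
Proof.
  intros Hx Hf. unfold frac, Int_part.
  assert (Hu : (z + 1)%Z = up x).
  { apply tech_up; rewrite plus_IZR; change (IZR 1) with 1; lra. }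
  rewrite <- Hu. replace (z + 1 - 1)%Z with z by ring. lra.
Qed.

Lemma frac_range x : 0 <= frac x < 1.
Proof.
  unfold frac, Int_part. rewrite minus_IZR. destruct (archimed x) as [H1 H2].
  change (IZR 1) with 1. lra.
Qed.

Lemma frac_addZ x z : frac (x + IZR z) = frac x.
Proof.
  apply frac_unique with (z := (Int_part x + z)%Z); [|apply frac_range].
  unfold frac. rewrite plus_IZR. ring.
Qed.

Lemma frac_shift a b z : a = b + IZR z -> frac a = frac b.
Proof. intros ->. apply frac_addZ. Qed.

Lemma frac_id x : 0 <= x < 1 -> frac x = x.
Proof. intros H. apply frac_unique with (z := 0%Z); [simpl; ring | exact H]. Qed.

Lemma frac_eq a b : frac a = frac b -> exists z, a = b + IZR z.
Proof.
  unfold frac. intros H. exists (Int_part a - Int_part b)%Z.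
  rewrite minus_IZR. lra.
Qed.

Lemma frac_def x : x = frac x + IZR (Int_part x).
Proof. unfold frac. ring. Qed.

Lemma int_small z : -1 < IZR z < 1 -> z = 0%Z.
Proof.
  intros [H1 H2]. apply lt_IZR in H2. change (-1) with (IZR (-1)) in H1.
  apply lt_IZR in H1. lia.
Qed.

Lemma theta_Z q : exists s : Z, theta q = IZR s /\ (s = 1 \/ s = -1)%Z.
Proof.
  unfold theta. destruct (Rlt_dec q (1/2)).
  - exists 1%Z. auto.
  - exists (-1)%Z. auto.
Qed.

Lemma phi_eq alpha q p :
  phi alpha (q, p) = (frac (q + p + alpha * theta q), frac (p + alpha * theta q)).
Proof. reflexivity. Qed.

Definition in01 (x : R * R) := 0 <= fst x < 1 /\ 0 <= snd x < 1.

Lemma phi_in01 alpha x : in01 (phi alpha x).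
Proof. destruct x as [q p]. rewrite phi_eq. split; apply frac_range. Qed.

Lemma iter_in01 alpha t x : in01 x -> in01 (Nat.iter t (phi alpha) x).
Proof. intros H. destruct t; [exact H|]. rewrite Nat.iter_succ. apply phi_in01. Qed.

Lemma phi_inj alpha x y : in01 x -> in01 y -> phi alpha x = phi alpha y -> x = y.
Proof.
  destruct x as [q1 p1], y as [q2 p2]; unfold in01; cbn [fst snd]. intros Hx Hy H.
  rewrite !phi_eq in H. injection H as H1 H2.
  apply frac_eq in H1. apply frac_eq in H2. destruct H1 as [z1 H1], H2 as [z2 H2].
  assert (Hq : q1 = q2 + IZR (z1 - z2)) by (rewrite minus_IZR; lra).
  assert (z1 - z2 = 0)%Z by (apply int_small; lra).
  rewrite H, Rplus_0_r in Hq. subst q2.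
  assert (z2 = 0)%Z by (apply int_small; lra). subst z2. f_equal. simpl in H2. lra.
Qed.

Lemma iter_cancel alpha t y z : in01 y -> in01 z ->
  Nat.iter t (phi alpha) y = Nat.iter t (phi alpha) z -> y = z.
Proof.
  intros Hy Hz. induction t; simpl; auto.
  intros H. apply IHt. apply phi_inj with alpha; auto; apply iter_in01; auto.
Qed.

Lemma orbit (alpha p0 q0 : R) (j0 : Z) (t : nat) :
  exists J j : Z, Nat.iter t (phi alpha) (frac q0, frac (p0 + IZR j0 * alpha)) =
    (frac (q0 + INR t * p0 + IZR J * alpha), frac (p0 + IZR j * alpha)).
Proof.
  induction t as [|t [J [j IH]]].
  - exists 0%Z, j0. simpl. f_equal. f_equal. ring.
  - rewrite Nat.iter_succ, IH, phi_eq.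
    destruct (theta_Z (frac (q0 + INR t * p0 + IZR J * alpha))) as [s [Hs _]].
    rewrite Hs. exists (J + j + s)%Z, (j + s)%Z. f_equal.
    + apply frac_shift with (z := (- Int_part (q0 + INR t * p0 + IZR J * alpha)
                                 - Int_part (p0 + IZR j * alpha))%Z).
      unfold frac. rewrite S_INR, !plus_IZR, minus_IZR, opp_IZR. ring.
    + apply frac_shift with (z := (- Int_part (p0 + IZR j * alpha))%Z).
      unfold frac. rewrite !plus_IZR, opp_IZR. ring.
Qed.

Lemma pigeon (M : nat) : forall (P : nat -> nat -> Prop),
  (forall t, (t <= M)%nat -> exists v, (v < M)%nat /\ P t v) ->
  exists t1 t2 v, (t1 < t2 <= M)%nat /\ P t1 v /\ P t2 v.
Proof.
  induction M as [|M IH]; intros P HP.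
  - destruct (HP 0%nat (le_n 0)) as [v [Hv _]]. lia.
  - destruct (HP (S M) (le_n _)) as [v0 [Hv0 HPv0]].
    destruct (classic (exists t, (t <= M)%nat /\ P t v0)) as [[t [Ht HPt]]|Hno].
    + exists t, (S M), v0. repeat split; auto; lia.
    + set (P' := fun t w => exists v, (v < S M)%nat /\ P t v /\ v <> v0 /\
                   w = (if (v <? v0)%nat then v else v - 1)%nat).
      destruct (IH P') as [t1 [t2 [w [Ht [[v1 [H1 [H1' [H1'' E1]]]] [v2 [H2 [H2' [H2'' E2]]]]]]]]].
      * intros t Ht. destruct (HP t ltac:(lia)) as [v [Hv HPv]].
        assert (v <> v0) by (intro; subst; apply Hno; eauto).
        exists (if (v <? v0)%nat then v else v - 1)%nat. split.
        -- destruct (Nat.ltb_spec v v0); lia.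
        -- unfold P'. exists v; auto.
      * assert (v1 = v2).
        { subst w. destruct (Nat.ltb_spec v1 v0); destruct (Nat.ltb_spec v2 v0); lia. }
        subst v2. exists t1, t2, v1. repeat split; auto; lia.
Qed.

Lemma div_fact d N : (1 <= d <= N)%nat -> exists c, fact N = (d * c)%nat.
Proof.
  induction N; intros H. { lia. }
  destruct (Nat.eq_dec d (S N)).
  - subst. exists (fact N). reflexivity.
  - destruct IHN as [c Hc]. { lia. } exists (S N * c)%nat.
    change (fact (S N)) with (S N * fact N)%nat. rewrite Hc. ring.
Qed.

Lemma iter_mult {A} (f : A -> A) x d c : Nat.iter d f x = x -> Nat.iter (d * c) f x = x.
Proof.
  intros H. induction c. { rewrite Nat.mul_0_r. reflexivity. }
  replace (d * S c)%nat with (d + d * c)%nat by ring.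
  rewrite Nat.iter_add, IHc. exact H.
Qed.
Lemma circ_red (m n : nat) alpha p0 (j : Z) : (0 < m)%nat -> alpha = INR n / INR m ->
  exists k, (k < m)%nat /\ frac (p0 + IZR j * alpha) = frac (p0 + INR k * alpha).
Proof.
  intros Hm Hal. set (M := Z.of_nat m).
  assert (HM : (0 < M)%Z) by (unfold M; lia).
  exists (Z.to_nat (j mod M)). split.
  - destruct (Z.mod_pos_bound j M HM). lia.
  - apply frac_shift with (z := (j / M * Z.of_nat n)%Z).
    rewrite INR_IZR_INZ, Z2Nat.id by (destruct (Z.mod_pos_bound j M HM); lia).
    rewrite (Z_div_mod_eq_full j M) at 1.
    rewrite Hal, !INR_IZR_INZ, mult_IZR, plus_IZR, mult_IZR. fold M.
    assert (IZR M <> 0) by (apply not_0_IZR; lia). field. auto.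
Qed.

Lemma circ_distinct (m n : nat) alpha p0 k1 k2 : (0 < n)%nat -> (0 < m)%nat ->
  Nat.gcd n m = 1%nat -> alpha = INR n / INR m -> (k1 < m)%nat -> (k2 < m)%nat ->
  frac (p0 + INR k1 * alpha) = frac (p0 + INR k2 * alpha) -> k1 = k2.
Proof.
  intros Hn Hm Hg Hal.
  assert (Hgen : forall a b, (b < a < m)%nat ->
     frac (p0 + INR a * alpha) = frac (p0 + INR b * alpha) -> False).
  { intros a b Hab H. apply frac_eq in H. destruct H as [z Hz].
    assert (E : IZR (Z.of_nat (a - b) * Z.of_nat n) = IZR (z * Z.of_nat m)).
    { rewrite !mult_IZR, <- !INR_IZR_INZ, minus_INR by lia.
      assert (INR m <> 0) by (apply not_0_INR; lia).
      rewrite Hal in Hz.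
      assert (Hz' : (INR a - INR b) * (INR n / INR m) = IZR z) by lra.
      replace ((INR a - INR b) * INR n) with ((INR a - INR b) * (INR n / INR m) * INR m)
        by (field; auto).
      rewrite Hz'. ring. }
    apply eq_IZR in E.
    assert (Hz0 : (0 <= z)%Z).
    { assert (0 < Z.of_nat (a - b))%Z by lia. assert (0 < Z.of_nat n)%Z by lia.
      assert (0 < Z.of_nat m)%Z by lia. nia. }
    assert (E' : ((a - b) * n = Z.to_nat z * m)%nat).
    { apply Nat2Z.inj. rewrite !Nat2Z.inj_mul, Z2Nat.id by lia. lia. }
    assert (Hd : Nat.divide m (n * (a - b))).
    { exists (Z.to_nat z). rewrite <- E'. ring. }
    apply Nat.gauss in Hd. 2: rewrite Nat.gcd_comm; exact Hg.
    apply Nat.divide_pos_le in Hd; lia. }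
  intros H1 H2 H. destruct (Nat.lt_trichotomy k1 k2) as [Hl|[He|Hl]]; auto.
  - exfalso. apply (Hgen k2 k1); auto.
  - exfalso. apply (Hgen k1 k2); auto.
Qed.
Lemma Lambda_in01 m alpha p0 x : Lambda m alpha p0 x -> in01 x.
Proof.
  intros [Hq [k [_ Hp]]]. split; auto. rewrite Hp. apply frac_range.
Qed.

Lemma Lambda_inv m n alpha p0 x : (0 < m)%nat -> alpha = INR n / INR m ->
  Lambda m alpha p0 x -> Lambda m alpha p0 (phi alpha x).
Proof.
  intros Hm Hal. destruct x as [q p]. intros [Hq [k [Hk Hp]]]. cbn [fst snd] in *. subst p.
  rewrite phi_eq. split. { apply frac_range. }
  destruct (theta_Z q) as [s [Hs _]]. rewrite Hs.
  destruct (circ_red m n alpha p0 (Z.of_nat k + s) Hm Hal) as [k' [Hk' E]].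
  exists k'. split; auto. cbn [snd]. rewrite <- E.
  apply frac_shift with (z := (- Int_part (p0 + INR k * alpha))%Z).
  unfold frac. rewrite plus_IZR, opp_IZR, INR_IZR_INZ. ring.
Qed.

Lemma Lambda_surj m n alpha p0 y : (0 < m)%nat -> alpha = INR n / INR m ->
  Lambda m alpha p0 y -> exists x, Lambda m alpha p0 x /\ phi alpha x = y.
Proof.
  intros Hm Hal. destruct y as [Q P]. intros [HQ [k [Hk HP]]]. cbn [fst snd] in *. subst P.
  destruct (theta_Z (frac (Q - frac (p0 + INR k * alpha)))) as [s [Hs _]].
  destruct (circ_red m n alpha p0 (Z.of_nat k - s) Hm Hal) as [k' [Hk' E]].
  exists (frac (Q - frac (p0 + INR k * alpha)), frac (p0 + INR k' * alpha)). split.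
  - split; [apply frac_range | exists k'; auto].
  - rewrite phi_eq, Hs, <- E. f_equal.
    + transitivity (frac Q); [| apply frac_id; auto].
      apply frac_shift with (z := (Int_part (p0 + INR k * alpha)
          - Int_part (Q - frac (p0 + INR k * alpha))
          - Int_part (p0 + IZR (Z.of_nat k - s) * alpha))%Z).
      unfold frac. rewrite !minus_IZR, !INR_IZR_INZ. ring.
    + apply frac_shift with (z := (- Int_part (p0 + IZR (Z.of_nat k - s) * alpha))%Z).
      unfold frac. rewrite !opp_IZR, !minus_IZR, !INR_IZR_INZ. ring.
Qed.

Lemma rat_pos p0 : is_rational p0 -> exists a b, (0 < b)%Z /\ p0 = IZR a / IZR b.
Proof.
  intros [a [b [Hb Hp]]]. destruct (Z_lt_le_dec 0 b).
  - exists a, b. auto.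
  - exists (- a)%Z, (- b)%Z. split; [lia|]. rewrite Hp, !opp_IZR.
    assert (IZR b <> 0) by (apply not_0_IZR; auto). field. auto.
Qed.
Theorem lemma2 (n m : nat) (p0 : R) :
  (0 < n)%nat -> (0 < m)%nat -> Nat.gcd n m = 1%nat ->
  0 <= p0 < 1 ->
  let alpha := INR n / INR m in
  (* Lambda is a union of m distinct horizontal circles *)
  (forall k1 k2 : nat, (k1 < m)%nat -> (k2 < m)%nat -> k1 <> k2 ->
     frac (p0 + INR k1 * alpha) <> frac (p0 + INR k2 * alpha)) /\
  (* (i) *)
  (forall y, Lambda m alpha p0 y <-> exists x, Lambda m alpha p0 x /\ phi alpha x = y) /\
  IET_on (phi alpha) (Lambda m alpha p0) /\
  (* (ii) *)
  (is_rational p0 -> exists k : nat, (1 <= k)%nat /\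
     forall x, Lambda m alpha p0 x -> Nat.iter k (phi alpha) x = x) /\
  (* (iii) *)
  (~ is_rational p0 -> forall x, Lambda m alpha p0 x ->
     forall k : nat, (1 <= k)%nat -> Nat.iter k (phi alpha) x <> x).
Proof.
  intros Hn Hm Hg Hp0 alpha.
  assert (Hal : alpha = INR n / INR m) by reflexivity. clearbody alpha.
  assert (Hdist : forall k1 k2, (k1 < m)%nat -> (k2 < m)%nat ->
     frac (p0 + INR k1 * alpha) = frac (p0 + INR k2 * alpha) -> k1 = k2).
  { intros k1 k2 h1 h2 E. exact (circ_distinct m n alpha p0 k1 k2 Hn Hm Hg Hal h1 h2 E). }
  split. { intros k1 k2 h1 h2 hne E. apply hne. auto. }
  split.
  { intros y; split; [apply Lambda_surj with n; auto |].
    intros [x [Hx <-]]. apply Lambda_inv with n; auto. }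
  split.
  { split; [intros; apply Lambda_inv with n; auto|].
    split. { intros x y Hx Hy E. apply phi_inj with alpha; auto; eapply Lambda_in01; eauto. }
    split; [intros; apply Lambda_surj with n; auto|].
    exists (2 * m)%nat,
      (fun i => if (i <? m)%nat then 0 else 1/2),
      (fun i => if (i <? m)%nat then 1/2 else 1),
      (fun i => frac (p0 + INR (if (i <? m)%nat then i else (i - m)%nat) * alpha)),
      (fun i => frac (p0 + INR (if (i <? m)%nat then i else (i - m)%nat) * alpha)
                + alpha * (if (i <? m)%nat then 1 else -1)),
      (fun i => alpha * (if (i <? m)%nat then 1 else -1)).
    split; [| split; [| split]].
    - intros i Hi. destruct (Nat.ltb_spec i m); lra.
    - intros i [q pp] Hi. unfold hseg, Lambda; cbn [fst snd].
      destruct (Nat.ltb_spec i m); intros [Hq Hp]; (split; [lra|]).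
      + exists i. auto.
      + exists (i - m)%nat. split; [lia | auto].
    - intros [q pp] [Hq [k [Hk Hp]]]. cbn [fst snd] in *. unfold hseg; cbn [fst snd].
      destruct (Rlt_dec q (1/2)).
      + exists k. split; [lia|].
        replace (k <? m)%nat with true by (symmetry; apply Nat.ltb_lt; auto).
        split; [split; [lra|auto]|].
        intros j Hj. destruct (Nat.ltb_spec j m); intros [Hq' Hp'].
        * apply Hdist; auto. congruence.
        * lra.
      + exists (k + m)%nat. split; [lia|].
        replace (k + m <? m)%nat with false by (symmetry; apply Nat.ltb_ge; lia).
        replace (k + m - m)%nat with k by lia.
        split; [split; [lra|auto]|].
        intros j Hj. destruct (Nat.ltb_spec j m); intros [Hq' Hp'].
        * lra.
        * assert (j - m = k)%nat by (apply Hdist; [lia|auto|congruence]). lia.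
    - intros i [q pp] Hi. unfold hseg; cbn [fst snd].
      rewrite phi_eq. unfold theta.
      destruct (Nat.ltb_spec i m); intros [Hq Hp]; subst pp;
        destruct (Rlt_dec q (1/2)); try lra; f_equal; f_equal; ring. }
  split.
  - intros Hrat. destruct (rat_pos p0 Hrat) as [a [b [Hb Hp]]].
    set (Dz := (b * Z.of_nat m)%Z).
    assert (HDz : (0 < Dz)%Z) by (unfold Dz; lia).
    set (Dn := Z.to_nat Dz).
    exists (fact (Dn * m)). split; [apply lt_O_fact|].
    intros [q pp] [Hq [k0 [Hk0 Hpp]]]. cbn [fst snd] in *. subst pp.
    set (x0 := (q, frac (p0 + INR k0 * alpha))).
    assert (Hx0 : x0 = (frac q, frac (p0 + IZR (Z.of_nat k0) * alpha)))
      by (unfold x0; rewrite (frac_id q Hq), INR_IZR_INZ; auto).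
    set (G := fun v : nat => (frac (q + INR (v / m) / IZR Dz), frac (p0 + INR (v mod m) * alpha))).
    assert (Hcl : forall t, (t <= Dn * m)%nat -> exists v, (v < Dn * m)%nat /\
                   Nat.iter t (phi alpha) x0 = G v).
    { intros t _. rewrite Hx0.
      destruct (orbit alpha p0 q (Z.of_nat k0) t) as [J [j E]]. rewrite E.
      destruct (circ_red m n alpha p0 j Hm Hal) as [s [Hs Es]].
      set (Nt := (Z.of_nat t * a * Z.of_nat m + J * Z.of_nat n * b)%Z).
      destruct (Z.mod_pos_bound Nt Dz HDz) as [Hr1 Hr2].
      set (r := Z.to_nat (Nt mod Dz)).
      assert (Hrl : (r < Dn)%nat) by (unfold r, Dn; lia).
      exists (r * m + s)%nat. split; [nia|].
      unfold G. f_equal.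
      + replace ((r * m + s) / m)%nat with r.
        2:{ rewrite Nat.div_add_l by lia. rewrite Nat.div_small by lia. lia. }
        apply frac_shift with (z := (Nt / Dz)%Z).
        assert (HN : IZR Nt = IZR Dz * IZR (Nt / Dz) + IZR (Nt mod Dz)).
        { rewrite <- mult_IZR, <- plus_IZR. f_equal. apply Z_div_mod_eq_full. }
        unfold r. rewrite (INR_IZR_INZ (Z.to_nat (Nt mod Dz))), Z2Nat.id by lia.
        replace (IZR (Nt mod Dz)) with (IZR Nt - IZR Dz * IZR (Nt / Dz)) by lra.
        unfold Nt, Dz. rewrite Hp, Hal, !INR_IZR_INZ, !plus_IZR, !mult_IZR.
        assert (IZR b <> 0) by (apply not_0_IZR; lia).
        assert (IZR (Z.of_nat m) <> 0) by (apply not_0_IZR; lia).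
        field. auto.
      + rewrite Es. f_equal. f_equal. f_equal. f_equal.
        rewrite Nat.add_comm, Nat.Div0.mod_add, Nat.mod_small; lia. }
    destruct (pigeon (Dn * m) (fun t v => Nat.iter t (phi alpha) x0 = G v) Hcl)
      as [t1 [t2 [v [Ht [E1 E2]]]]].
    assert (Hin : in01 x0) by (unfold x0; split; cbn [fst snd]; auto; apply frac_range).
    assert (Hper : Nat.iter (t2 - t1) (phi alpha) x0 = x0).
    { apply iter_cancel with alpha t1; auto. { apply iter_in01; auto. }
      rewrite <- Nat.iter_add. replace (t1 + (t2 - t1))%nat with t2 by lia. congruence. }
    destruct (div_fact (t2 - t1) (Dn * m)) as [c Hc]. { lia. }
    fold x0. rewrite Hc. apply iter_mult. exact Hper.
  - intros Hnr [q pp] [Hq [k0 [Hk0 Hpp]]] t Ht E. cbn [fst snd] in *. subst pp.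
    assert (Hx0 : (q, frac (p0 + INR k0 * alpha)) = (frac q, frac (p0 + IZR (Z.of_nat k0) * alpha)))
      by (rewrite (frac_id q Hq), INR_IZR_INZ; auto).
    rewrite Hx0 in E.
    destruct (orbit alpha p0 q (Z.of_nat k0) t) as [J [j E']]. rewrite E' in E.
    injection E as E1 _. rewrite (frac_id q Hq) in E1. rewrite <- (frac_id q Hq) in E1 at 2.
    apply frac_eq in E1. destruct E1 as [z Hz].
    apply Hnr. exists (z * Z.of_nat m - J * Z.of_nat n)%Z, (Z.of_nat t * Z.of_nat m)%Z.
    split; [lia|].
    assert (Ht' : INR t * p0 = IZR z - IZR J * alpha) by lra.
    assert (INR t <> 0) by (apply not_0_INR; lia).
    replace p0 with ((INR t * p0) / INR t) by (field; auto).
    rewrite Ht', Hal. rewrite !minus_IZR, !mult_IZR, <- !INR_IZR_INZ.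
    assert (INR m <> 0) by (apply not_0_INR; lia).
    field. auto.
Qed.
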